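(* For a flat layout $L$, the following are equivalent: (1) $L$ is compact; (2) $\mathrm{coal}^\flat(L)$ is compact; (3) $\mathrm{squeeze}(L)$ is compact; (4) $\mathrm{sort}(L)$ is compact.
   Context: A flat layout $L=(s_1,\dots,s_m):(d_1,\dots,d_m)$ has positive integer shape entries and nonnegative integer stride entries, with modes $s_i:d_i$; $\mathrm{size}(L)=\prod s_i$, $\mathrm{cosize}(L)=1+\sum(s_i-1)d_i$. Layout function: $\Phi_L(x)=\sum x_id_i$ with $x_i=\lfloor x/(s_1\cdots s_{i-1})\rfloor\bmod s_i$ on $[0,\mathrm{size}(L))$. $L$ is compact if $\Phi_L:[0,\mathrm{size}(L))\to[0,\mathrm{cosize}(L))$ is a bijection. $\mathrm{squeeze}(L)$ removes modes with $s_i=1$. $\mathrm{coal}^\flat(L)$ is obtained from $\mathrm{squeeze}(L)$ by repeatedly replacing adjacent modes $s_i,s_{i+1}:d_i,d_{i+1}$ with $d_{i+1}=s_id_i$ by $s_is_{i+1}:d_i$. Order pairs by $s:d\preceq s':d'$ iff $d<d'$ or ($d=d'$ and $s\le s'$); $\mathrm{sort}(L)$ reorders the modes (stably) into $\preceq$-nondecreasing order. *)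

(* Defs.v *)
From mathcomp Require Import all_boot.
Set Implicit Arguments. Unset Strict Implicit. Unset Printing Implicit Defensive.

(* A flat layout (s_1,...,s_m):(d_1,...,d_m) is represented as the list of its
   modes [:: (s_1,d_1); ...; (s_m,d_m)] : seq (nat * nat)  (shape, stride). *)
Definition layout := seq (nat * nat).

Definition flat_layout (L : layout) : bool := all (fun p => 0 < p.1) L.

Definition shape (L : layout) : seq nat := map fst L.
Definition stride (L : layout) : seq nat := map snd L.

Definition lsize (L : layout) : nat := \prod_(p <- L) p.1.
Definition lcosize (L : layout) : nat := 1 + \sum_(p <- L) (p.1 - 1) * p.2.

Definition coord (L : layout) (x i : nat) : nat :=
  (x %/ \prod_(p <- take i L) p.1) %% (nth (1, 0) L i).1.

Definition layout_fun (L : layout) (x : nat) : nat :=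
  \sum_(i < size L) coord L x i * (nth (1, 0) L i).2.

Definition compact (L : layout) : Prop :=
  [/\ (forall x, x < lsize L -> layout_fun L x < lcosize L),
      (forall x y, x < lsize L -> y < lsize L ->
                   layout_fun L x = layout_fun L y -> x = y)
    & (forall z, z < lcosize L -> exists2 x, x < lsize L & layout_fun L x = z)].

Definition squeeze (L : layout) : layout := filter (fun p => p.1 != 1) L.

(* One left-to-right pass of merging: the accumulator (reversed) has its last
   mode at its head; a new mode (s',d') is merged into the previous (s,d)
   whenever d' = s * d, giving (s * s', d). *)
Definition coal_step (acc : layout) (p : nat * nat) : layout :=
  match acc with
  | q :: acc' => if p.2 == q.1 * q.2 then (q.1 * p.1, q.2) :: acc' else p :: acc
  | [::] => [:: p]
  end.

Definition coal_flat (L : layout) : layout :=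
  rev (foldl coal_step [::] (squeeze L)).

Definition mode_le (p q : nat * nat) : bool :=
  (p.2 < q.2) || ((p.2 == q.2) && (p.1 <= q.1)).

Definition lsort (L : layout) : layout := sort mode_le L.

(* Main.v *)
Require Import Defs.
From mathcomp Require Import all_boot.
From mathcomp Require Import zify.

Definition step (p : nat * nat) (S : seq nat) : seq nat :=
  [seq a * p.2 + b | b <- S, a <- iota 0 p.1].
Definition sums (L : layout) : seq nat := foldr step [:: 0] L.

Lemma grid (T : Type) (f : nat -> nat -> T) s n :
  [seq f (x %% s) (x %/ s) | x <- iota 0 (s * n)] =
  [seq f a y | y <- iota 0 n, a <- iota 0 s].
Proof.
elim: n => [|n IH]; first by rewrite muln0.
rewrite mulnS addnC iotaD map_cat IH -addn1 iotaD /= add0n.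
rewrite /allpairs map_cat flatten_cat /= cats0; congr (_ ++ _).
rewrite -{1}(addn0 (s * n)) iotaDl -map_comp add0n.
idtac.
apply/eq_in_map => a; rewrite mem_iota add0n => /= Ha.
have s0 : 0 < s by move: Ha; case: (s).
rewrite /= mulnC modnMDl divnMDl // modn_small // divn_small // addn0 //=.
Qed.

Lemma layout_fun_cons s d L x :
  layout_fun ((s, d) :: L) x = (x %% s) * d + layout_fun L (x %/ s).
Proof.
rewrite /layout_fun /= big_ord_recl /coord /= big_nil divn1; congr (_ + _).
apply: eq_bigr => i _; rewrite /coord /= big_cons /= divnMA //.
Qed.

Lemma phi_sums L : map (layout_fun L) (iota 0 (lsize L)) = sums L.
Proof.
elim: L => [|[s d] L IH].
  by rewrite /lsize big_nil /= /layout_fun big_ord0.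
rewrite /lsize big_cons /= -/(lsize L).
rewrite (eq_map (layout_fun_cons s d L) (iota _ _)).
rewrite (grid _ (fun a y => a * d + layout_fun L y)) -IH /step.
by rewrite /allpairs -map_comp.
Qed.

Lemma transpose (F : nat -> nat -> nat) (A C : seq nat) :
  perm_eq [seq F a c | c <- C, a <- A] [seq F a c | a <- A, c <- C].
Proof.
elim: C => [|c C IH].
  by rewrite /= ; elim: A => //.
rewrite /= perm_sym (perm_allpairs_consr (fun a c => F a c) A (fun _ => c) (fun _ => C)).
by rewrite perm_cat2l perm_sym.
Qed.

Lemma step_cat p A B : step p (A ++ B) = step p A ++ step p B.
Proof. by rewrite /step /allpairs map_cat flatten_cat. Qed.

Lemma step_perm p A B : perm_eq A B -> perm_eq (step p A) (step p B).
Proof. by move=> H; apply: perm_flatten; apply: perm_map. Qed.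

Lemma step_swap p q S : perm_eq (step p (step q S)) (step q (step p S)).
Proof.
elim: S => [|e S IH] //=.
rewrite /step /= -!/(step _ _) !step_cat perm_cat //.
set F := fun (a c : nat) => a * p.2 + (c * q.2 + e).
have E1 : step p [seq a * q.2 + e | a <- iota 0 q.1] = [seq F a c | c <- iota 0 q.1, a <- iota 0 p.1].
  by rewrite /step /allpairs -map_comp.
have E2 : step q [seq a * p.2 + e | a <- iota 0 p.1] = [seq F a c | a <- iota 0 p.1, c <- iota 0 q.1].
  rewrite /step /allpairs -map_comp; congr flatten; apply: eq_map => a /=; apply: eq_map => c.
  by rewrite /F addnCA.
rewrite E1 E2; exact: transpose.
Qed.

Lemma sums_cat A B : sums (A ++ B) = foldr step (sums B) A.
Proof. by rewrite /sums foldr_cat. Qed.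

Lemma step_fold_perm x L1 T :
  perm_eq (foldr step (step x T) L1) (step x (foldr step T L1)).
Proof.
elim: L1 => [|y L1 IH] //=.
apply: perm_trans (step_swap _ _ _).
exact: step_perm.
Qed.

Lemma sums_perm L L' : perm_eq L L' -> perm_eq (sums L) (sums L').
Proof.
elim: L L' => [|x L IH] L'.
  by rewrite perm_sym => /perm_nilP ->.
move=> H.
have Hx : x \in L' by rewrite -(perm_mem H) mem_head.
move: H; case/splitPr: Hx => L1 L2 H.
have H2 : perm_eq L (L1 ++ L2).
  rewrite -(perm_cons x); apply: perm_trans H _.
  by rewrite -cat1s perm_catCA.
rewrite sums_cat [sums (_ :: L2)]/sums /= -/(sums L2).
eapply perm_trans; last by rewrite perm_sym; apply: step_fold_perm.
rewrite -sums_cat; exact: step_perm (IH _ H2).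
Qed.

Definition cs (L : layout) := \sum_(p <- L) (p.1 - 1) * p.2.

Lemma lcosizeE L : lcosize L = 1 + cs L.
Proof. by []. Qed.

Lemma cs_perm L L' : perm_eq L L' -> cs L = cs L'.
Proof. by move=> H; rewrite /cs (perm_big _ H). Qed.

Lemma sums_squeeze L : sums (squeeze L) = sums L.
Proof.
elim: L => [|[s d] L IH] //=.
case: eqP => [->|_] /=; last by rewrite IH.
rewrite IH /step /allpairs /=.
elim: (sums L) => //= b S IH2; by rewrite -IH2 mul0n.
Qed.

Lemma cs_squeeze L : cs (squeeze L) = cs L.
Proof.
elim: L => [|[s d] L IH] //=.
rewrite /cs big_cons /= -/(cs L).
case: eqP => [->|_] /=; rewrite -IH /cs //.
by rewrite big_cons.
Qed.

Lemma merge_block (q p : nat * nat) b : p.2 = q.1 * q.2 ->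
  step q [seq a * p.2 + b | a <- iota 0 p.1] = [seq a * q.2 + b | a <- iota 0 (q.1 * p.1)].
Proof.
move=> Hp.
rewrite /step /allpairs -map_comp.
have := grid _ (fun a' a => a' * q.2 + (a * p.2 + b)) q.1 p.1.
rewrite /allpairs => <-.
apply: eq_map => x /=.
rewrite Hp addnA mulnA -mulnDl; congr (_ * _ + _).
by rewrite [x in _ = x](divn_eq x q.1) addnC mulnC.
Qed.

Lemma merge_sums (q p : nat * nat) T : p.2 = q.1 * q.2 ->
  step q (step p T) = step (q.1 * p.1, q.2) T.
Proof.
move=> Hp; elim: T => [|b T IH] //.
have stepc : forall x c U, step x (c :: U) = [seq a * x.2 + c | a <- iota 0 x.1] ++ step x U by [].
by rewrite !stepc step_cat IH merge_block.
Qed.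

Lemma coal_inv acc l : all (fun p => 0 < p.1) l ->
  sums (rev (foldl coal_step acc l)) = sums (rev acc ++ l) /\
  cs (rev (foldl coal_step acc l)) = cs (rev acc ++ l).
Proof.
elim: l acc => [|p l IH] acc /=; first by rewrite cats0.
case/andP => Hp Hl.
case: (IH (coal_step acc p) Hl) => -> ->.
case: acc => [|q acc'] //=.
case: eqP => Hq /=; last by rewrite rev_cons cat_rcons.
rewrite !rev_cons -!cats1 -!catA /= !sums_cat /cs !big_cat /= !big_cons.
split; first by rewrite /= merge_sums.
congr (_ + _); rewrite addnA; congr (_ + _).
rewrite Hq /=.
case: q Hq => q1 q2 /= Hq.
case: p Hp Hq => p1 p2 /= Hp Hq.
clear Hq; case: q1 => [|k]; first by rewrite !(mul0n, muln0, sub0n).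
case: p1 Hp => // j _.
rewrite mulSn addSn !subn1 /=.
nia.
Qed.

Lemma compactE L : compact L <-> perm_eq (sums L) (iota 0 (lcosize L)).
Proof.
rewrite -phi_sums.
set f := layout_fun L; set n := lsize L; set m := lcosize L.
split.
  case=> Hr Hi Hs.
  apply: uniq_perm; last 1 first.
  - move=> z; rewrite mem_iota add0n /=.
    apply/mapP/idP.
      by case=> x; rewrite mem_iota add0n /= => /Hr Hx ->.
    by case/Hs => x Hx <-; exists x => //; rewrite mem_iota.
  - rewrite map_inj_in_uniq ?iota_uniq //.
    by move=> x y; rewrite !mem_iota !add0n /=; apply: Hi.
  - exact: iota_uniq.
move=> P.
have Hmem z : (z \in map f (iota 0 n)) = (z < m).
  by rewrite (perm_mem P) mem_iota.
have U : uniq (map f (iota 0 n)) by rewrite (perm_uniq P) iota_uniq.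
split.
- move=> x Hx; rewrite -Hmem; apply: map_f; by rewrite mem_iota.
- move=> x y Hx Hy Hxy; rewrite -/f -/n in Hxy Hx Hy.
  have Hs : size (map f (iota 0 n)) = n by rewrite size_map size_iota.
  have := nth_uniq 0 (i:=x) (j:=y) _ _ U.
  rewrite Hs (nth_map 0) ?size_iota // (nth_map 0) ?size_iota // !nth_iota // !add0n Hxy eqxx.
  by move/(_ Hx Hy)/esym/eqP.
- move=> z; rewrite -Hmem => /mapP [x]; rewrite mem_iota add0n /= => Hx ->.
  by exists x.
Qed.

Lemma flat_squeeze L : flat_layout L -> all (fun p => 0 < p.1) (squeeze L).
Proof.
move=> H; apply/allP => x; rewrite mem_filter => /andP [_ Hx]; exact: (allP H x Hx).
Qed.

Theorem mainTheorem12 (L : layout) : flat_layout L ->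
  [/\ (compact L <-> compact (coal_flat L)),
      (compact L <-> compact (squeeze L))
    & (compact L <-> compact (lsort L))].
Proof.
move=> HL.
have [S1 C1] := coal_inv [::] (squeeze L) (flat_squeeze L HL).
rewrite /= in S1 C1.
split; rewrite !compactE !lcosizeE.
- by rewrite /coal_flat S1 C1 sums_squeeze cs_squeeze.
- by rewrite sums_squeeze cs_squeeze.
- have Hp : perm_eq L (lsort L) by rewrite perm_sym perm_sort.
  rewrite (cs_perm _ _ Hp).
  split => H.
    by apply: perm_trans H; rewrite perm_sym; apply: sums_perm.
  by apply: perm_trans H; apply: sums_perm.
Qed.
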